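(* Let $Q$ be an $m\times N$ real matrix with columns indexed by a set $U$, and let $\gamma>0$, $C>0$. Suppose that for any fixed $U'\subseteq U$ there is an online factorization algorithm that solves the $(\gamma,C)$-bounded online average factorization problem for $Q|_{U'}$. Then there exists an online factorization algorithm that solves the $(\gamma,C')$-bounded online average factorization problem with insertions for $Q$, with $C'\le C\log_2(2N)$.
   Context: For a matrix, $\|L\|_{2\to\infty}$ is the maximum $\ell_2$ norm of a row, $\|R\|_{1\to2}$ the maximum $\ell_2$ norm of a column, $\|R\|_F$ the Frobenius norm, $\gamma_2(A)=\min\{\|L\|_{2\to\infty}\|R\|_{1\to2}:LR=A\}$; rows $q_1,q_2,\ldots$ of $Q$ arrive online and $Q_t$ is the first $t$ rows. For $U'\subseteq U$, $Q|_{U'}$ is $Q$ with all entries in columns outside $U'$ replaced by $0$. For a sequence $\mathcal{U}=(U_0,\ldots,U_m)$ of subsets of $U$, $Q|_{\mathcal{U}}$ is $Q$ with, in each row $i$, the entries in columns outside $U_i$ replaced by $0$; $\mathcal{U}$ is insertion-only if $U_0\subseteq U_1\subseteq\cdots$. The $(\gamma,C)$-bounded online average factorization problem for $Q|_{U'}$: the algorithm chooses an initial (possibly empty) $R_0$; at each time $t$ it receives the $t$-th row of $Q|_{U'}$ and either (i) appends rows to $R_{t-1}$ to form $R_t$ and outputs $\ell_t$ with $\ell_tR_t$ equal to that row, with $\|R_t\|_F\le\sqrt{|U'|}$ and $\|L_t\|_{2\to\infty}\le C\gamma$ ($L_t$ having zero-padded rows $\ell_1,\ldots,\ell_t$), or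 (ii) correctly asserts that $\gamma_2$ of its first $t$ rows exceeds $\gamma$. The $(\gamma,C)$-bounded online average factorization problem with insertions for $Q$: at each time $t$ the algorithm receives $q_t$ and a set $U_t\subseteq U$, where $(U_0,U_1,\ldots)$ is insertion-only, and must either correctly assert $\gamma_2(Q_t)>\gamma$, or compute an online factorization $L_tR_t=Q_t|_{(U_0,\ldots,U_t)}$ ($R_t$ obtained from $R_{t-1}$ by appending rows, $\ell_t$ the new last row of $L_t$) with $\|L_t\|_{2\to\infty}\le C\gamma$, $\|R_t\|_F\le\sqrt{|U_t|}$, and all rows of $R_t$ supported on $U_t$. *)

(* Defs.v *)
From HB Require Import structures.
From mathcomp Require Import all_boot all_order all_algebra.
From mathcomp Require Import classical_sets reals exp.
Set Implicit Arguments.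
Unset Strict Implicit.
Unset Printing Implicit Defensive.
Import Order.TTheory GRing.Theory Num.Theory.
Local Open Scope ring_scope.
Local Open Scope classical_set_scope.

Section Defs.
Variable R : realType.

Definition norm2inf (p k : nat) (L : 'M[R]_(p, k)) : R :=
  \big[Num.max/0]_(i < p) Num.sqrt (\sum_(j < k) L i j ^+ 2).

Definition norm12 (k n : nat) (M : 'M[R]_(k, n)) : R :=
  \big[Num.max/0]_(j < n) Num.sqrt (\sum_(i < k) M i j ^+ 2).

(* gamma_2(A) = min over all factorizations L R = A (any inner dimension k)
   of ||L||_{2->oo} ||R||_{1->2}; written as an infimum (the min is attained). *)
Definition gamma2 (p n : nat) (A : 'M[R]_(p, n)) : R :=
  inf [set x : R | exists k (L : 'M[R]_(p, k)) (M : 'M[R]_(k, n)),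
                     L *m M = A /\ x = norm2inf L * norm12 M].

Definition mx_of_rows (n : nat) (rs : seq 'rV[R]_n) : 'M[R]_(size rs, n) :=
  \matrix_(i < size rs, j < n) (nth 0 rs i) 0 j.

Definition gamma2_rows (n : nat) (rs : seq 'rV[R]_n) : R := gamma2 (mx_of_rows rs).

Definition rows_of (m n : nat) (A : 'M[R]_(m, n)) : seq 'rV[R]_n :=
  [seq row i A | i <- enum 'I_m].

(* Q|_{U'} : zero out the columns outside U' *)
Definition restr (m n : nat) (A : 'M[R]_(m, n)) (U' : {set 'I_n}) : 'M[R]_(m, n) :=
  \matrix_(i, j) (if j \in U' then A i j else 0).

Definition restr_row (n : nat) (q : 'rV[R]_n) (U' : {set 'I_n}) : 'rV[R]_n :=
  \row_j (if j \in U' then q 0 j else 0).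

(* Output of an online factorization algorithm at one time step:
   either assert "gamma_2 of the rows so far exceeds gamma", or append the rows
   [newR] to the current right factor and output the new left row [ell]
   (coefficients w.r.t. all rows of the current right factor). *)
Inductive out (n : nat) : Type :=
  | Assert : out n
  | Step : seq 'rV[R]_n -> seq R -> out n.

Definition is_step (n : nat) (o : out n) : bool :=
  if o is Step _ _ then true else false.
Definition new_rows (n : nat) (o : out n) : seq 'rV[R]_n :=
  if o is Step nr _ then nr else [::].
Definition ell_of (n : nat) (o : out n) : seq R :=
  if o is Step _ l then l else [::].

Definition norm2 (l : seq R) : R := Num.sqrt (\sum_(x <- l) x ^+ 2).

Definition frob (n : nat) (rs : seq 'rV[R]_n) : R :=
  Num.sqrt (\sum_(r <- rs) \sum_(j < n) r 0 j ^+ 2).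

Definition lincomb (n : nat) (l : seq R) (rs : seq 'rV[R]_n) : 'rV[R]_n :=
  \sum_(i < size rs) nth 0 l i *: nth 0 rs i.

(* An online algorithm maps the prefix of rows received so far to its output;
   on the empty prefix its [new_rows] are the initial right factor R_0. *)
Definition online_alg (n : nat) := seq 'rV[R]_n -> out n.

Definition Rfactor (n : nat) (alg : online_alg n) (ins : seq 'rV[R]_n) (t : nat)
  : seq 'rV[R]_n :=
  flatten [seq new_rows (alg (take k ins)) | k <- iota 0 t.+1].

(* alg solves the (gamma,C)-bounded online average factorization problem for the
   m x n matrix A, where the Frobenius budget is [budget] (= sqrt |U'|). *)
Definition solves_avg (m n : nat) (alg : online_alg n) (A : 'M[R]_(m, n))
  (gamma C budget : R) : Prop :=
  let ins := rows_of A in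
  forall t : nat, (0 < t <= m)%N ->
    (forall s : nat, (0 < s < t)%N -> is_step (alg (take s ins))) ->
    match alg (take t ins) return Prop with
    | Assert => gamma < gamma2_rows (take t ins)
    | Step _ l =>
        [/\ size l = size (Rfactor alg ins t),
            lincomb l (Rfactor alg ins t) = nth 0 ins t.-1,
            frob (Rfactor alg ins t) <= budget
          & forall s : nat, (0 < s <= t)%N ->
              norm2 (ell_of (alg (take s ins))) <= C * gamma]
    end.

(* The algorithm sees the sets U_0, ..., U_t and the rows q_1, ..., q_t. *)
Definition online_alg_ins (n : nat) := seq {set 'I_n} -> seq 'rV[R]_n -> out n.

Definition sets_upto (n : nat) (U : nat -> {set 'I_n}) (t : nat) : seq {set 'I_n} :=
  [seq U k | k <- iota 0 t.+1].

Definition Rfactor_ins (n : nat) (alg : online_alg_ins n) (U : nat -> {set 'I_n})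
  (ins : seq 'rV[R]_n) (t : nat) : seq 'rV[R]_n :=
  flatten [seq new_rows (alg (sets_upto U k) (take k ins)) | k <- iota 0 t.+1].

Definition insertion_only (n : nat) (U : nat -> {set 'I_n}) : Prop :=
  forall t : nat, U t \subset U t.+1.

Definition solves_avg_ins (m n : nat) (alg : online_alg_ins n) (Q : 'M[R]_(m, n))
  (gamma C : R) : Prop :=
  let ins := rows_of Q in
  forall U : nat -> {set 'I_n}, insertion_only U ->
  forall t : nat, (0 < t <= m)%N ->
    (forall s : nat, (0 < s < t)%N -> is_step (alg (sets_upto U s) (take s ins))) ->
    match alg (sets_upto U t) (take t ins) return Prop with
    | Assert => gamma < gamma2_rows (take t ins)
    | Step _ l =>
        [/\ size l = size (Rfactor_ins alg U ins t),
            lincomb l (Rfactor_ins alg U ins t) = restr_row (nth 0 ins t.-1) (U t),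
            frob (Rfactor_ins alg U ins t) <= Num.sqrt (#|U t|%:R),
            (forall r, r \in Rfactor_ins alg U ins t ->
                forall j : 'I_n, j \notin U t -> r 0 j = 0)
          & forall s : nat, (0 < s <= t)%N ->
              norm2 (ell_of (alg (sets_upto U s) (take s ins))) <= C * gamma]
    end.

Definition log2 (x : R) : R := ln x / ln 2.

End Defs.

(* Main.v *)
Require Import Defs.
From HB Require Import structures.
From mathcomp Require Import all_boot all_order all_algebra zify.
From mathcomp Require Import boolp classical_sets reals exp.
Set Implicit Arguments. Unset Strict Implicit. Unset Printing Implicit Defensive.
Import Order.TTheory GRing.Theory Num.Theory.


Definition Pb (n r j : nat) : bool :=
  odd (n %/ 2 ^ j) && (n %/ 2 ^ j.+1 * 2 ^ j.+1 <= r < n %/ 2 ^ j.+1 * 2 ^ j.+1 + 2 ^ j).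

Lemma Pb_S n r j : Pb n r j.+1 = Pb (n %/ 2) (r %/ 2) j.
Proof.
rewrite /Pb.
have e1 : forall x, n %/ 2 ^ x.+1 = n %/ 2 %/ 2 ^ x by move=> x; rewrite expnS divnMA.
rewrite e1 e1; congr (_ && _).
set a := (n %/ 2 %/ 2 ^ j.+1).
rewrite leq_divRL // ltn_divLR // mulnDl -!mulnA -!expnSr.
by [].
Qed.

Lemma Pb_lt n r j : Pb n r j -> r < n.
Proof.
case/andP=> ho /andP [_ h2].
have d1 : n %/ 2 ^ j.+1 = n %/ 2 ^ j %/ 2 by rewrite expnSr divnMA.
have e : n %/ 2 ^ j = (n %/ 2 ^ j %/ 2) * 2 + 1.
  by rewrite {1}(divn_eq (n %/ 2 ^ j) 2) modn2 ho.
have : n %/ 2 ^ j * 2 ^ j <= n by apply: leq_divM.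
rewrite e d1 expnS in h2 *. nia.
Qed.

Lemma Pb_count K : forall n r, r < n -> n < 2 ^ K -> \sum_(j < K) Pb n r j = 1.
Proof.
elim: K => [|K IH] n r hr hn.
  rewrite expn0 in hn; lia.
rewrite big_ord_recl /=.
under eq_bigr => j _ do rewrite /bump /= Pb_S.
have P0 : Pb n r 0 = odd n && (r == n.-1).
  rewrite /Pb !expn0 !expn1 divn1.
  have := odd_double_half n; case: (odd n) => /= h; apply/idP/idP; lia.
rewrite P0.
case: (boolP (odd n && (r == n.-1))) => h /=.
  rewrite big1 // => j _.
  case E: (Pb _ _ _) => //; move/Pb_lt: E. move: h; case/andP => ho /eqP ->.
  have := odd_double_half n; rewrite ho /=; lia.
rewrite add0n; apply: IH.
  move: h; have := odd_double_half n; case: (odd n) => /= h1 h2; lia.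
rewrite expnS in hn; lia.
Qed.


Section Comb.
Variables (N K : nat) (U : nat -> {set 'I_N}).

Fixpoint ordf (k : nat) : seq 'I_N :=
  match k with
  | 0 => [seq x <- enum 'I_N | x \in U 0]
  | k'.+1 => let o := ordf k' in o ++ [seq x <- enum 'I_N | (x \in U k) && (x \notin o)]
  end.

Definition nk k := size (ordf k).
Definition bid := ('I_K * 'I_N.+1)%type.
Definition active k (b : bid) : bool :=
  odd (nk k %/ 2 ^ b.1) && (b.2 == nk k %/ 2 ^ b.1.+1 * 2 ^ b.1.+1 :> nat).
Definition blk k (b : bid) : {set 'I_N} :=
  [set x | (x \in ordf k) && (b.2 <= index x (ordf k) < b.2 + 2 ^ b.1)].
Definition ever t (b : bid) : bool := has (fun s => active s b) (iota 1 t).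

Lemma ordf_prefix k t : k <= t -> exists s, ordf t = ordf k ++ s.
Proof.
elim: t => [|t IH]; first by rewrite leqn0 => /eqP ->; exists [::]; rewrite cats0.
rewrite leq_eqVlt => /orP [/eqP -> | ]; first by exists [::]; rewrite cats0.
rewrite ltnS => /IH [s hs]; exists (s ++ [seq x <- enum 'I_N | (x \in U t.+1) && (x \notin ordf t)]).
by rewrite /= hs catA.
Qed.

Lemma uniq_ordf k : uniq (ordf k).
Proof.
elim: k => [|k IH] /=; first by rewrite filter_uniq // enum_uniq.
rewrite cat_uniq IH filter_uniq ?enum_uniq // andbT /=.
apply/hasPn => x; rewrite mem_filter => /andP [/andP [_ h] _]; exact: h.
Qed.

Lemma nk_le k : nk k <= N.
Proof.
rewrite /nk -(card_uniqP (uniq_ordf k)).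
by apply: leq_trans (max_card _) _; rewrite card_ord.
Qed.

Lemma mem_ordf k x : (forall t, U t \subset U t.+1) -> (x \in ordf k) = (x \in U k).
Proof.
move=> hU; elim: k => [|k IH] /=; first by rewrite mem_filter mem_enum andbT.
rewrite mem_cat mem_filter mem_enum andbT IH.
case: (boolP (x \in U k)) => h /=; last by rewrite andbT.
by rewrite (fintype.subsetP (hU k)).
Qed.

Lemma active_le k b : active k b -> b.2 + 2 ^ b.1 <= nk k.
Proof.
case/andP=> ho /eqP ->.
have d1 : nk k %/ 2 ^ b.1.+1 = nk k %/ 2 ^ b.1 %/ 2 by rewrite expnSr divnMA.
have e : nk k %/ 2 ^ b.1 = (nk k %/ 2 ^ b.1 %/ 2) * 2 + 1.
  by rewrite {1}(divn_eq (nk k %/ 2 ^ b.1) 2) modn2 ho.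
have : nk k %/ 2 ^ b.1 * 2 ^ b.1 <= nk k by apply: leq_divM.
rewrite e d1 expnS => *. nia.
Qed.

Lemma blk_sub t b x : x \in blk t b -> x \in ordf t.
Proof. by rewrite inE => /andP []. Qed.

Lemma blk_stable k t b : k <= t -> active k b -> blk k b = blk t b.
Proof.
move=> hkt /active_le; rewrite /nk => hle.
have [s hs] := ordf_prefix hkt.
apply/setP => x; rewrite !inE hs mem_cat index_cat.
case: (boolP (x \in ordf k)) => //= hx.
case: (boolP (x \in s)) => //= _.
apply/esym/negbTE; apply/negP => /andP [_ h]; move: h hle; lia.
Qed.

Lemma divq_uniq a r j : a * 2 ^ j.+1 <= r -> r < a * 2 ^ j.+1 + 2 ^ j ->
  r %/ 2 ^ j.+1 = a.
Proof.
move=> h1 h2; have hp : 0 < 2 ^ j by rewrite expn_gt0.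
apply/eqP; rewrite eqn_leq leq_divRL ?expn_gt0 // h1 andbT -ltnS ltn_divLR ?expn_gt0 //.
rewrite expnS in h1 h2 *; nia.
Qed.

Lemma sum_pair (F : bid -> nat) :
  \sum_(b : bid) F b = \sum_(j < K) \sum_(lo < N.+1) F (j, lo).
Proof. by rewrite pair_big /=; apply: eq_bigr => -[j lo]. Qed.

Lemma sum_eq1 (c : nat) (f : nat -> bool) : c < N.+1 ->
  \sum_(lo < N.+1) ((lo == c :> nat) && f lo) = f c.
Proof.
move=> hc; rewrite (bigD1 (Ordinal hc)) //= eqxx /= big1 ?addn0 //.
move=> i hi; case E: (i == c :> nat) => //=.
by move: hi; rewrite -val_eqE /= E.
Qed.

Lemma sum_le1 (c : nat) (f : nat -> bool) :
  \sum_(lo < N.+1) ((lo == c :> nat) && f lo) <= 1.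
Proof.
case: (ltnP c N.+1) => hc; first by rewrite sum_eq1 //; case: (f c).
rewrite big1 // => i _; case E: (i == c :> nat) => //=.
move/eqP: E => E; have := ltn_ord i; rewrite E; lia.
Qed.

Lemma partition t x : nk t < 2 ^ K -> x \in ordf t ->
  \sum_(b : bid) (active t b && (x \in blk t b)) = 1.
Proof.
move=> hK hx.
rewrite -(@Pb_count K (nk t) (index x (ordf t))) //; last by rewrite index_mem.
rewrite sum_pair.
apply: eq_bigr => j _.
have -> : \sum_(lo < N.+1) (active t (j, lo) && (x \in blk t (j, lo))) =
  \sum_(lo < N.+1) ((lo == nk t %/ 2 ^ j.+1 * 2 ^ j.+1 :> nat) &&
     (odd (nk t %/ 2 ^ j) && (lo <= index x (ordf t) < lo + 2 ^ j))).
  apply: eq_bigr => lo _; rewrite /active /blk inE hx /=.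
  by case: (odd _); case: (_ == _).
rewrite (@sum_eq1 (nk t %/ 2 ^ j.+1 * 2 ^ j.+1) (fun lo => odd (nk t %/ 2 ^ j) && (lo <= index x (ordf t) < lo + 2 ^ j))) //.
rewrite ltnS; apply: leq_trans (leq_divM _ _) (nk_le t).
Qed.

Lemma active_count t : \sum_(b : bid) active t b <= K.
Proof.
rewrite sum_pair.
rewrite -[X in _ <= X](card_ord K) -sum1_card.
apply: leq_sum => j _.
have := @sum_le1 (nk t %/ 2 ^ j.+1 * 2 ^ j.+1) (fun _ => odd (nk t %/ 2 ^ j)).
congr (_ <= _); apply: eq_bigr => lo _; rewrite /active /=.
by case: (odd _); case: (_ == _).
Qed.

Lemma ever_count t x :
  \sum_(b : bid) (ever t b && (x \in blk t b)) <= K.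
Proof.
rewrite sum_pair.
rewrite -[X in _ <= X](card_ord K) -sum1_card.
apply: leq_sum => j _.
set r := index x (ordf t).
apply: leq_trans (@sum_le1 (r %/ 2 ^ j.+1 * 2 ^ j.+1) (fun _ => true)).
apply: leq_sum => lo _.
case E: (ever t (j, lo)) => //=.
rewrite /blk inE andbT.
case E2: (_ && _) => //; move/andP: E2 => [_ /andP [h1 h2]].
case/hasP: E => s _ /andP [_ /eqP /= hlo].
rewrite hlo in h1 h2 *.
simpl in h2; have := divq_uniq h1 h2; rewrite -/r => ->; by rewrite eqxx.
Qed.

Lemma ever_blk_sum t : (forall t, U t \subset U t.+1) ->
  \sum_(b : bid) ever t b * #|blk t b| <= K * #|U t|.
Proof.
move=> hU.
have -> : \sum_(b : bid) ever t b * #|blk t b| =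
    \sum_(x : 'I_N) \sum_(b : bid) (ever t b && (x \in blk t b)).
  rewrite exchange_big /=; apply: eq_bigr => b _.
  rewrite -sum1_card big_mkcond /= big_distrr /=; apply: eq_bigr => x _.
  by case: (ever t b); case: (x \in blk t b).
rewrite -sum1_card big_distrr /= [X in _ <= X]big_mkcond /=.
apply: leq_sum => x _.
case: (boolP (x \in U t)) => hx; first by rewrite muln1 ever_count.
rewrite big1 // => b _; case E: (x \in blk t b); last by rewrite andbF.
by move: hx; rewrite -(@mem_ordf t x hU) (blk_sub E).
Qed.

End Comb.

Local Open Scope ring_scope.

Section G2.
Variable R : realType.

Lemma bigmax_ge0 (I : finType) (F : I -> R) : 0 <= \big[Num.max/0]_(i : I) F i.
Proof. by elim/big_rec: _ => // i x _ hx; rewrite le_max hx orbT. Qed.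

Lemma norm2inf_ge0 p k (L : 'M[R]_(p, k)) : 0 <= norm2inf L.
Proof. exact: bigmax_ge0. Qed.
Lemma norm12_ge0 p k (L : 'M[R]_(p, k)) : 0 <= norm12 L.
Proof. exact: bigmax_ge0. Qed.

Lemma norm2inf_cast p1 p2 k (e : p1 = p2) (L : 'M[R]_(p1, k)) :
  norm2inf (castmx (e, erefl k) L) = norm2inf L.
Proof. by case: p2 / e; rewrite castmx_id. Qed.

Lemma norm12_restr k n (M : 'M[R]_(k, n)) B : norm12 (restr M B) <= norm12 M.
Proof.
rewrite /norm12; apply: (big_ind2 (fun x y => x <= y)) => //.
  by move=> *; apply: le_max2.
move=> j _; apply: ler_wsqrtr; apply: ler_sum => i _; rewrite mxE.
by case: (j \in B) => //; rewrite expr0n /= sqr_ge0.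
Qed.

Lemma gamma2_restr n (rs : seq 'rV[R]_n) (B : {set 'I_n}) :
  gamma2_rows (map (fun r => restr_row r B) rs) <= gamma2_rows rs.
Proof.
rewrite /gamma2_rows /gamma2.
set E' := (X in (inf X <= _)%R). set E := (X in (_ <= inf X)%R).
have hlb : has_lbound E'.
  exists 0 => y [k [L [M [_ ->]]]]; exact: mulr_ge0 (norm2inf_ge0 _) (norm12_ge0 _).
have hne : nonempty E.
  exists (norm2inf (mx_of_rows rs) * norm12 (1%:M : 'M[R]_n)).
  by exists n, (mx_of_rows rs), 1%:M; rewrite mulmx1.
apply: lb_le_inf hne _ => x [k [L [M [hLM ->]]]].
have e : size rs = size (map (fun r => restr_row r B) rs) by rewrite size_map.
pose L' := castmx (e, erefl k) L.
have hy : E' (norm2inf L' * norm12 (restr M B)).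
  exists k, L', (restr M B); split => //.
  apply/matrixP => i j; rewrite !mxE.
  have hi : (cast_ord (esym e) i < size rs)%N by [].
  rewrite (nth_map 0) -?e //= mxE.
  transitivity ((L *m restr M B) (cast_ord (esym e) i) j).
    rewrite mxE; apply: eq_bigr => l _; rewrite castmxE /=.
    by congr (L _ _ * _); apply: val_inj.
  have -> : L *m restr M B = restr (L *m M) B.
    apply/matrixP => a b; rewrite !mxE; case hb: (b \in B).
      by apply: eq_bigr => l _; rewrite mxE hb.
    by rewrite big1 // => l _; rewrite mxE hb mulr0.
  by rewrite hLM !mxE.
apply: le_trans (ge_inf hlb hy) _.
rewrite /L' norm2inf_cast; apply: ler_wpM2l; first exact: norm2inf_ge0.
exact: norm12_restr.
Qed.

End G2.


Section Main.
Variables (R : realType) (m N : nat) (Q : 'M[R]_(m, N)) (gamma C : R).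
Variable algof : {set 'I_N} -> online_alg R N.
Hypothesis hgamma : 0 < gamma.
Hypothesis hC : 0 < C.
Hypothesis halg : forall B, solves_avg (algof B) (restr Q B) gamma C (Num.sqrt (#|B|%:R)).

Local Notation K := (trunc_log 2 N).+1.
Local Notation ins := (rows_of Q).
Definition insB B := rows_of (restr Q B).
Definition RB B t := Rfactor (algof B) (insB B) t.
Definition ellB B t := ell_of (algof B (take t (insB B))).

Lemma size_ins : size ins = m.
Proof. by rewrite /rows_of size_map size_enum_ord. Qed.

Lemma insB_eq B : insB B = map (fun r => restr_row r B) ins.
Proof.
rewrite /insB /rows_of -map_comp; apply: eq_map => i /=.
by apply/rowP => j; rewrite !mxE.
Qed.

Lemma RB_prefix B t t' : (t <= t')%N -> exists s, RB B t' = RB B t ++ s.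
Proof.
move=> h; rewrite /RB /Rfactor.
have -> : t'.+1 = (t.+1 + (t' - t))%N by rewrite addSn subnKC.
rewrite iotaD map_cat flatten_cat; by eexists.
Qed.

Lemma RB_nth B t t' i : (t <= t')%N -> (i < size (RB B t))%N ->
  nth 0 (RB B t') i = nth 0 (RB B t) i.
Proof. by move=> h hi; have [s ->] := RB_prefix B h; rewrite nth_cat hi. Qed.

Lemma RB_size B t t' : (t <= t')%N -> (size (RB B t) <= size (RB B t'))%N.
Proof. by move=> h; have [s ->] := RB_prefix B h; rewrite size_cat leq_addr. Qed.

Definition G t := forall s, (0 < s <= t)%N -> gamma2_rows (take s ins) <= gamma.

Lemma gamma2B B s : gamma2_rows (take s (insB B)) <= gamma2_rows (take s ins).
Proof. by rewrite insB_eq -map_take gamma2_restr. Qed.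

Lemma base_step B t : (t <= m)%N -> G t ->
  forall s, (0 < s <= t)%N -> is_step (algof B (take s (insB B))).
Proof.
move=> htm hG s; elim/ltn_ind: s => s IH hs.
have hsm : (0 < s <= m)%N by case/andP: hs => h1 h2; rewrite h1 (leq_trans h2 htm).
have := @halg B; rewrite /solves_avg => /(_ s hsm).
have hprev : forall s', (0 < s' < s)%N -> is_step (algof B (take s' (rows_of (restr Q B)))).
  move=> s' /andP [h1 h2]; apply: IH => //; rewrite h1 /=.
  case/andP: hs => _; exact: leq_trans (ltnW h2).
move/(_ hprev); rewrite -/(insB B).
case: (algof B (take s (insB B))) => // H.
have := hG s hs; have := gamma2B B s; move=> h1 h2.
by have := lt_le_trans H (le_trans h1 h2); rewrite ltxx.
Qed.

Lemma base_ok B t s : (t <= m)%N -> G t -> (0 < s <= t)%N ->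
  [/\ size (ellB B s) = size (RB B s),
      lincomb (ellB B s) (RB B s) = nth 0 (insB B) s.-1,
      frob (RB B s) <= Num.sqrt (#|B|%:R)
    & norm2 (ellB B s) <= C * gamma].
Proof.
move=> htm hG hs.
have hsm : (0 < s <= m)%N by case/andP: hs => h1 h2; rewrite h1 (leq_trans h2 htm).
have hprev : forall s', (0 < s' < s)%N -> is_step (algof B (take s' (rows_of (restr Q B)))).
  move=> s' /andP [h1 h2]; apply: (@base_step B t htm hG); rewrite h1 /=.
  case/andP: hs => _; exact: leq_trans (ltnW h2).
have := @halg B; rewrite /solves_avg => /(_ s hsm hprev).
have := @base_step B t htm hG s hs.
rewrite /ellB /RB -/(insB B).
case E: (algof B (take s (insB B))) => // [nr l] _ [h1 h2 h3 h4]; split => //.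
have := h4 s; rewrite E; apply; by rewrite leqnn andbT; case/andP: hs.
Qed.


Local Notation bidK := (bid N K).
Definition desc := (bidK * {set 'I_N} * nat)%type.

Fixpoint done (U : nat -> {set 'I_N}) (b : bidK) (k : nat) : nat :=
  match k with
  | 0 => 0%N
  | k'.+1 => if active U k b then size (RB (blk U k b) k) else done U b k'
  end.

Definition newidx U k : seq desc :=
  flatten [seq [seq (b, blk U k b, i) | i <- iota (done U b k.-1) (done U b k - done U b k.-1)]
          | b <- enum {: bidK}].
Definition idx U t : seq desc := flatten [seq newidx U k | k <- iota 1 t].
Definition cK : R := Num.sqrt (K%:R).
Definition rowD (p : desc) : 'rV[R]_N := cK^-1 *: restr_row (nth 0 (RB p.1.2 m) p.2) p.1.2.
Definition coefD U t (p : desc) : R :=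
  if active U t p.1.1 then cK * nth 0 (ellB p.1.2 t) p.2 else 0.

Definition alg : online_alg_ins R N := fun Us pre =>
  let t := size pre in
  let V := fun k => nth finset.set0 Us k in
  if t == 0%N then Step [::] [::]
  else if `[< gamma < gamma2_rows pre >] then Assert R N
  else Step (map rowD (newidx V t)) (map (coefD V t) (idx V t)).

Lemma ordf_ext (U1 U2 : nat -> {set 'I_N}) k :
  (forall i, (i <= k)%N -> U1 i = U2 i) -> ordf U1 k = ordf U2 k.
Proof.
elim: k => [|k IH] h /=; first by rewrite h.
rewrite IH ?h // => i hi; apply: h; exact: leqW.
Qed.

Lemma done_ext (U1 U2 : nat -> {set 'I_N}) b k :
  (forall i, (i <= k)%N -> U1 i = U2 i) -> done U1 b k = done U2 b k.
Proof.
elim: k => [|k IH] h //=.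
rewrite /active /nk /blk (ordf_ext h) IH // => i hi; apply: h; exact: leqW.
Qed.

Lemma newidx_ext (U1 U2 : nat -> {set 'I_N}) k :
  (forall i, (i <= k)%N -> U1 i = U2 i) -> newidx U1 k = newidx U2 k.
Proof.
move=> h; rewrite /newidx /blk (ordf_ext h); congr flatten; apply: eq_map => b.
rewrite (done_ext b h) (@done_ext U1 U2 b k.-1) // => i hi; apply: h.
exact: leq_trans hi (leq_pred _).
Qed.

Lemma idx_ext (U1 U2 : nat -> {set 'I_N}) t :
  (forall i, (i <= t)%N -> U1 i = U2 i) -> idx U1 t = idx U2 t.
Proof.
move=> h; rewrite /idx; congr flatten; apply/eq_in_map => k.
rewrite mem_iota => /andP [_ hk]; apply: newidx_ext => i hi; apply: h.
rewrite add1n ltnS in hk; exact: leq_trans hi hk.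
Qed.

Lemma coefD_ext (U1 U2 : nat -> {set 'I_N}) t :
  (forall i, (i <= t)%N -> U1 i = U2 i) -> coefD U1 t =1 coefD U2 t.
Proof. by move=> h p; rewrite /coefD /active /nk (ordf_ext h). Qed.

Lemma sets_upto_nth (U : nat -> {set 'I_N}) t i : (i <= t)%N ->
  nth finset.set0 (sets_upto U t) i = U i.
Proof. by move=> h; rewrite /sets_upto (nth_map 0) ?size_iota // nth_iota. Qed.

Lemma algE (U : nat -> {set 'I_N}) t : (0 < t <= m)%N ->
  alg (sets_upto U t) (take t ins) =
  if `[< gamma < gamma2_rows (take t ins) >] then Assert R N
  else Step (map rowD (newidx U t)) (map (coefD U t) (idx U t)).
Proof.
case/andP=> h0 htm; rewrite /alg size_takel ?size_ins //.
have -> : (t == 0%N) = false by move: h0; case: (t).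
have hV : forall i, (i <= t)%N -> nth finset.set0 (sets_upto U t) i = U i.
  by move=> i; apply: sets_upto_nth.
by rewrite (newidx_ext hV) (idx_ext hV) (eq_map (coefD_ext hV)).
Qed.


Lemma done_spec U b k : done U b k = 0%N \/
  exists s, [/\ (0 < s <= k)%N, active U s b & done U b k = size (RB (blk U s b) s)].
Proof.
elim: k => [|k IH] /=; first by left.
case: ifP => ha; first by right; exists k.+1; rewrite ltn0Sn leqnn.
case: IH => [->|[s [hs h1 h2]]]; first by left.
right; exists s; split => //; case/andP: hs => -> /= h; exact: leqW.
Qed.

Lemma done_mono U b k : (done U b k <= done U b k.+1)%N.
Proof.
rewrite [done U b k.+1]/=; case: ifP => // ha.
case: (done_spec U b k) => [->//|[s [hs h1 ->]]].
case/andP: hs => _ hsk.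
rewrite (blk_stable (leqW hsk) h1); apply: RB_size; exact: leqW.
Qed.

Lemma tele (V : nmodType) (d : nat -> nat) (F : nat -> V) t :
  d 0%N = 0%N -> (forall k, (d k <= d k.+1)%N) ->
  \sum_(k <- iota 1 t) \sum_(d k.-1 <= i < d k) F i = \sum_(0 <= i < d t) F i.
Proof.
move=> h0 hm; elim: t => [|t IH]; first by rewrite big_nil h0 big_geq.
have -> : iota 1 t.+1 = iota 1 t ++ [:: t.+1] by rewrite -[t.+1]addn1 iotaD addnC.
rewrite big_cat /= big_seq1 IH /=.
by rewrite -big_cat_nat.
Qed.

Lemma sum_idx (V : nmodType) U t (F : desc -> V) :
  \sum_(p <- idx U t) F p =
  \sum_(b : bidK) \sum_(0 <= i < done U b t) F (b, blk U t b, i).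
Proof.
rewrite /idx big_flatten big_map.
transitivity (\sum_(k <- iota 1 t) \sum_(b : bidK)
    \sum_(done U b k.-1 <= i < done U b k) F (b, blk U t b, i)).
  apply: eq_big_seq => k; rewrite mem_iota add1n ltnS => /andP [hk1 hkt].
  rewrite /newidx big_flatten big_map big_enum /=; apply: eq_bigr => b _.
  rewrite big_map /index_iota.
  case: k hk1 hkt => // k _ hkt /=.
  case: ifP => ha.
    by apply: eq_bigr => i _; rewrite (blk_stable hkt ha).
  by rewrite subnn /= !big_nil.
rewrite exchange_big /=; apply: eq_bigr => b _.
by rewrite tele //; apply: done_mono.
Qed.


Lemma lincomb_map T (x0 : T) (g : T -> R) (h : T -> 'rV[R]_N) s :
  lincomb (map g s) (map h s) = \sum_(p <- s) g p *: h p.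
Proof.
rewrite /lincomb size_map (big_nth x0) big_mkord; apply: eq_bigr => i _.
by rewrite !(nth_map x0).
Qed.

Lemma norm2_map T (g : T -> R) s : norm2 (map g s) = Num.sqrt (\sum_(p <- s) g p ^+ 2).
Proof. by rewrite /norm2 big_map. Qed.

Lemma frob_map T (h : T -> 'rV[R]_N) s :
  frob (map h s) = Num.sqrt (\sum_(p <- s) \sum_(j < N) h p 0 j ^+ 2).
Proof. by rewrite /frob big_map. Qed.

Lemma restr_row_sum n (a : nat -> R) (r : nat -> 'rV[R]_N) B :
  restr_row (\sum_(i < n) a i *: r i) B = \sum_(i < n) a i *: restr_row (r i) B.
Proof.
apply/rowP => j; rewrite !mxE !summxE; case: ifP => hj.
  by apply: eq_bigr => i _; rewrite !mxE hj.
by rewrite big1 // => i _; rewrite !mxE hj mulr0.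
Qed.

Lemma restr_row_id (q : 'rV[R]_N) B : restr_row (restr_row q B) B = restr_row q B.
Proof. by apply/rowP => j; rewrite /restr_row !mxE; case: (j \in B). Qed.

Lemma done_active U b t : (0 < t)%N -> active U t b -> done U b t = size (RB (blk U t b) t).
Proof. by case: t => //= t _ ->. Qed.

Lemma cK_gt0 : 0 < cK.
Proof. by rewrite /cK sqrtr_gt0 ltr0n. Qed.

Lemma cK2 : cK ^+ 2 = K%:R.
Proof. by rewrite /cK sqr_sqrtr // ler0n. Qed.

Lemma nth_ins t : (0 < t <= m)%N -> forall B,
  nth 0 (insB B) t.-1 = restr_row (nth 0 ins t.-1) B.
Proof.
case/andP=> h0 h1 B; rewrite insB_eq (nth_map 0) // size_ins.
by case: t h0 h1.
Qed.

Lemma lincomb_main U t : insertion_only U -> (0 < t <= m)%N -> G t ->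
  lincomb (map (coefD U t) (idx U t)) (map rowD (idx U t)) =
  restr_row (nth 0 ins t.-1) (U t).
Proof.
move=> hU hs hG; have htm : (t <= m)%N by case/andP: hs.
have ht0 : (0 < t)%N by case/andP: hs.
set q := nth 0 ins t.-1.
rewrite (lincomb_map (ord0, ord0, finset.set0, 0%N)) sum_idx.
have step : forall b : bidK, \sum_(0 <= i < done U b t)
    coefD U t (b, blk U t b, i) *: rowD (b, blk U t b, i) =
    if active U t b then restr_row q (blk U t b) else 0.
  move=> b; rewrite /coefD /=; case: ifP => ha; last first.
    by rewrite big1 // => i _; rewrite scale0r.
  set B := blk U t b; rewrite done_active //.
  have hts : (0 < t <= t)%N by rewrite ht0 leqnn.
  have [h1 h2 h3 h4] := @base_ok B t t htm hG hts.
  transitivity (\sum_(0 <= i < size (RB B t)) nth 0 (ellB B t) i *: restr_row (nth 0 (RB B t) i) B).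
    apply: eq_big_nat => i hi; rewrite /rowD /= scalerA mulrAC mulfV ?mul1r.
      by rewrite (RB_nth htm).

    by rewrite gt_eqF // cK_gt0.
  rewrite big_mkord -restr_row_sum.
  by move: h2; rewrite /lincomb => ->; rewrite nth_ins // restr_row_id.
under eq_bigr => b _ do rewrite step.
apply/rowP => x; rewrite summxE.
transitivity (\sum_(b : bidK) q 0 x * ((active U t b && (x \in blk U t b)))%:R).
  apply: eq_bigr => b _; case: (active U t b) => /=; last by rewrite mxE mulr0.
  by rewrite !mxE; case: (x \in blk U t b); rewrite ?mulr1 ?mulr0.
rewrite -mulr_sumr -natr_sum !mxE.
case: ifP => hx.
  have hn : (nk U t < 2 ^ K)%N.
    by apply: leq_ltn_trans (nk_le U t) _; apply: trunc_log_ltn.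
  have hxo : x \in ordf U t by rewrite (@mem_ordf N U t x hU).
  by rewrite (@partition N K U t x hn hxo) mulr1.
rewrite big1 ?mulr0 // => b _; case E: (x \in blk U t b); last by rewrite andbF.
by move: hx; rewrite -(@mem_ordf N U t x hU) (blk_sub E).
Qed.


Lemma sqrt_le_sq (a b : R) : 0 <= a -> 0 <= b -> Num.sqrt a <= b -> a <= b ^+ 2.
Proof.
move=> ha hb h; by rewrite -(@ler_sqrt _ a (b ^+ 2) (sqr_ge0 b)) sqrtr_sqr ger0_norm.
Qed.

Lemma frob_main U t : insertion_only U -> (0 < t <= m)%N -> G t ->
  frob (map rowD (idx U t)) <= Num.sqrt (#|U t|%:R).
Proof.
move=> hU hs hG; have htm : (t <= m)%N by case/andP: hs.
have ht0 : (0 < t)%N by case/andP: hs.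
rewrite frob_map; apply: ler_wsqrtr; rewrite sum_idx.
have hK : 0 < (K%:R : R) by rewrite ltr0n.
have step : forall b : bidK, \sum_(0 <= i < done U b t) \sum_(j < N)
    (rowD (b, blk U t b, i)) 0 j ^+ 2 <= (ever U t b * #|blk U t b|)%:R / K%:R.
  move=> b; case: (done_spec U b t) => [->|[s [hs' ha hd]]].
    by rewrite big_geq // divr_ge0 // ler0n.
  have hst : (s <= t)%N by case/andP: hs'.
  have hev : ever U t b by apply/hasP; exists s => //; rewrite mem_iota add1n ltnS.
  rewrite hev mul1n hd -(blk_stable hst ha).
  set B := blk U s b.
  have [h1 h2 h3 h4] := @base_ok B t s htm hG hs'.
  have hsm : (s <= m)%N := leq_trans hst htm.
  have hS : \sum_(r <- RB B s) \sum_(j < N) r 0 j ^+ 2 <= #|B|%:R.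
    have h0 : 0 <= \sum_(r <- RB B s) \sum_(j < N) r 0 j ^+ 2.
      by apply: sumr_ge0 => r _; apply: sumr_ge0 => j _; apply: sqr_ge0.
    by have := sqrt_le_sq h0 (sqrtr_ge0 _) h3; rewrite sqr_sqrtr ?ler0n.
  rewrite (big_nth 0) in hS.
  apply: le_trans (_ : _ <= (\sum_(0 <= i < size (RB B s)) \sum_(j < N) (RB B s)`_i 0 j ^+ 2) / K%:R) _.
    rewrite mulr_suml; apply: ler_sum_nat => i hi; rewrite mulr_suml; apply: ler_sum => j _.
    rewrite /rowD /= !mxE (RB_nth hsm) //.
    rewrite exprMn exprVn cK2 mulrC ler_wpM2r //; first by rewrite invr_ge0 ler0n.
    by case: (j \in B); rewrite ?expr0n ?sqr_ge0.
  by rewrite ler_wpM2r // invr_ge0 ler0n.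
apply: le_trans (ler_sum _ (fun b _ => step b)) _.
rewrite -mulr_suml -natr_sum ler_pdivrMr // -natrM ler_nat mulnC.
exact: ever_blk_sum.
Qed.


Lemma norm_main U s : (0 < s <= m)%N -> G s ->
  norm2 (map (coefD U s) (idx U s)) <= K%:R * C * gamma.
Proof.
move=> hs hG; have hsm : (s <= m)%N by case/andP: hs.
have hs0 : (0 < s)%N by case/andP: hs.
have hss : (0 < s <= s)%N by rewrite hs0 leqnn.
have hKCg : 0 <= K%:R * C * gamma by rewrite !mulr_ge0 ?ler0n ?ltW.
rewrite norm2_map.
apply: le_trans (_ : _ <= Num.sqrt ((K%:R * C * gamma) ^+ 2)) _; last by rewrite sqrtr_sqr ger0_norm.
apply: ler_wsqrtr; rewrite sum_idx.
have step : forall b : bidK, \sum_(0 <= i < done U b s) coefD U s (b, blk U s b, i) ^+ 2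
    <= (active U s b)%:R * (K%:R * (C * gamma) ^+ 2).
  move=> b; rewrite /coefD /=; case ha: (active U s b); last first.
    by rewrite big1 ?mul0r // => i _; rewrite expr0n.
  rewrite mul1r done_active //.
  set B := blk U s b.
  have [h1 h2 h3 h4] := @base_ok B s s hsm hG hss.
  under eq_bigr => i _ do rewrite exprMn cK2.
  rewrite -mulr_sumr ler_wpM2l ?ler0n //.
  rewrite -h1; move: h4; rewrite /norm2 (big_nth 0) => h4.
  apply: sqrt_le_sq; first by apply: sumr_ge0 => x _; apply: sqr_ge0.
    by rewrite mulr_ge0 ?ltW.
  exact: h4.
apply: le_trans (ler_sum _ (fun b _ => step b)) _.
rewrite -mulr_suml -natr_sum.
apply: le_trans (_ : K%:R * (K%:R * (C * gamma) ^+ 2) <= _).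
  by rewrite ler_wpM2r ?ler_nat ?active_count // mulr_ge0 ?ler0n ?sqr_ge0.
have -> : (K%:R * C * gamma) ^+ 2 = K%:R * (K%:R * (C * gamma) ^+ 2) :> R.
  by rewrite -mulrA exprMn mulrA -expr2.
by [].
Qed.

Lemma supp_main U t : insertion_only U -> forall r, r \in map rowD (idx U t) ->
  forall j : 'I_N, j \notin U t -> r 0 j = 0.
Proof.
move=> hU r /mapP [p hp ->] j hj.
move: hp; rewrite /idx => /flattenP [ps /mapP [k hk ->]] /flattenP [ps' /mapP [b _ ->]].
move=> /mapP [i _ ->].
rewrite /rowD /= !mxE; case: ifP => hb; last by rewrite mulr0.
exfalso; move: hj; rewrite -(@mem_ordf N U t j hU).
move: hk; rewrite mem_iota add1n ltnS => /andP [_ hkt].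
have [s' ->] := ordf_prefix U hkt.
by rewrite mem_cat (blk_sub hb).
Qed.

Lemma Rfactor_main U t : (0 < t <= m)%N -> G t ->
  Rfactor_ins alg U ins t = map rowD (idx U t).
Proof.
move=> hs hG; have htm : (t <= m)%N by case/andP: hs.
rewrite /Rfactor_ins /= take0.
have -> : alg (sets_upto U 0) [::] = Step [::] [::] by [].
rewrite cat0s /idx map_flatten -map_comp; congr flatten.
apply/eq_in_map => k; rewrite mem_iota add1n ltnS => /andP [hk hkt].
have hkm : (0 < k <= m)%N by rewrite hk (leq_trans hkt htm).
rewrite /= algE //; case: asboolP => // h; exfalso.
have := hG k; rewrite hk hkt => /(_ isT) hle.
by have := lt_le_trans h hle; rewrite ltxx.
Qed.

End Main.


Unset Implicit Arguments.

Theorem lemma4p7 (R : realType) (m N : nat) (Q : 'M[R]_(m, N)) (gamma C : R)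
  (hgamma : 0 < gamma) (hC : 0 < C)
  (hbase : forall U' : {set 'I_N}, exists alg : online_alg R N,
      solves_avg alg (restr Q U') gamma C (Num.sqrt (#|U'|%:R))) :
  exists C' : R, C' <= C * log2 (2 * N%:R) /\
    exists alg : online_alg_ins R N, solves_avg_ins alg Q gamma C'.
Proof.
case: N Q hbase => [|N] Q hbase.
  exists 0; split; first by rewrite mulr0 /log2 ln0 // mul0r mulr0.
  exists (fun _ _ => Step [::] [::]) => ins U hU t ht hprev /=; rewrite {}/ins.
  have E : Rfactor_ins (fun _ _ => Step (R:=R) (n:=0) [::] [::]) U (rows_of Q) t = [::].
    by rewrite /Rfactor_ins; elim: (iota 0 t.+1).
  rewrite E; split => //.
  - by apply/rowP => -[].
  - by rewrite /frob big_nil sqrtr0 sqrtr_ge0.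
  - by move=> s _; rewrite /norm2 big_nil sqrtr0 mul0r.
have [algof halg] := choice hbase.
exists ((trunc_log 2 N.+1).+1%:R * C); split.
  rewrite mulrC; apply: ler_wpM2l; first exact: ltW.
  rewrite /log2.
  have hl2 : 0 < ln (2 : R) by apply: ln_gt0; rewrite ltr1n.
  rewrite ler_pdivlMr // -addn1 natrD mulrDl mul1r.
  have h2N : (2 ^ trunc_log 2 N.+1 <= N.+1)%N by apply: trunc_logP.
  rewrite lnM ?posrE ?ltr0n // addrC lerD2l.
  rewrite mulr_natl -lnXn ?ltr0n //.
  rewrite ler_ln ?posrE ?exprn_gt0 ?ltr0n //.
  by rewrite -natrX ler_nat.
exists (alg Q gamma algof) => ins U hU t ht hprev; rewrite {}/ins in hprev *.
rewrite algE //; case: asboolP => h //.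
have hG : G Q gamma t.
  move=> s /andP [hs0 hst]; case: (ltngtP s t) => hst'.
  - have := hprev s; rewrite hs0 hst' => /(_ isT).
    have hsm : (0 < s <= m)%N by rewrite hs0 (leq_trans hst (proj2 (andP ht))).
    rewrite algE //; case: asboolP => // h' _.
    by rewrite leNgt; apply/negP.
  - by move: hst; rewrite leqNgt hst'.
  - by rewrite hst' leNgt; apply/negP.
rewrite (Rfactor_main _ _ ht hG); split.
- by rewrite !size_map.
- exact: lincomb_main.
- exact: frob_main.
- exact: supp_main.
- move=> s /andP [hs0 hst].
  have hsm : (0 < s <= m)%N by rewrite hs0 (leq_trans hst (proj2 (andP ht))).
  have hGs : G Q gamma s.
    move=> s' /andP [h1 h2]; apply: hG; rewrite h1; exact: leq_trans h2 hst.
  rewrite algE //; case: asboolP => h' /=.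
    have := hGs s; rewrite hs0 leqnn => /(_ isT) hle.
    by have := lt_le_trans h' hle; rewrite ltxx.
  exact: norm_main.
Qed.
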